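(* Let $G$ be a graph and $v$ a vertex of $G$ of degree $1$. Then $G-v$ (delete $v$ and its incident edge) is strongly EFX-orientable if and only if $G$ is strongly EFX-orientable.
   Context: All graphs are finite and simple. For a graph $G=(V,E)$ and $v\in V$, $E(v)$ is the set of edges incident to $v$. A graphical instance on $G$ assigns to each vertex $v$ a valuation $f_v:2^E\to\mathbb{R}_{\ge 0}$ that is monotone ($A\subseteq B\Rightarrow f_v(A)\le f_v(B)$) and satisfies $f_v(X)=f_v(X\cap E(v))$ for all $X\subseteq E$. An orientation of $G$ chooses for each edge one of its endpoints as its head; vertex $v$ receives the bundle $X_v$ of edges whose head is $v$. The orientation is EFX if for all $u,v\in V$ and every $g\in X_v$, $f_u(X_u)\ge f_u(X_v\setminus\{g\})$. A graph $G$ is strongly EFX-orientable if for every graphical instance on $G$ there exists an EFX orientation. *)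

(* Defs.v *)
From HB Require Import structures.
From mathcomp Require Import all_boot all_order all_algebra.
From mathcomp Require Import reals.
Set Implicit Arguments. Unset Strict Implicit. Unset Printing Implicit Defensive.
Import Order.TTheory GRing.Theory Num.Theory.
Local Open Scope ring_scope.

(* A (finite, simple) graph is given by a vertex finType T and an adjacency
   relation adj : rel T (assumed symmetric and irreflexive where needed).
   Edges are the 2-element sets {x, y} with adj x y. *)
Section Graphs.
Variables (T : finType) (adj : rel T).

Definition is_edge (e : {set T}) : bool :=
  [exists x, exists y, adj x y && (e == [set x; y])].

Definition edge := {e : {set T} | is_edge e}.

Definition inc (v : T) : {set edge} := [set e : edge | v \in val e].

Variable R : realType.

Definition valuation_of (v : T) (f : {set edge} -> R) : Prop :=
  (forall X, 0 <= f X) /\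
  (forall A B : {set edge}, A \subset B -> f A <= f B) /\
  (forall X, f X = f (X :&: inc v)).

Definition graphical_instance (f : T -> {set edge} -> R) : Prop :=
  forall v, valuation_of v (f v).

Definition orientation (head : edge -> T) : Prop :=
  forall e, head e \in val e.

Definition bundle (head : edge -> T) (u : T) : {set edge} :=
  [set e | head e == u].

Definition EFX (f : T -> {set edge} -> R) (head : edge -> T) : Prop :=
  forall u w (g : edge), g \in bundle head w ->
    f u (bundle head w :\ g) <= f u (bundle head u).

Definition strongly_EFX_orientable : Prop :=
  forall f, graphical_instance f ->
    exists head, orientation head /\ EFX f head.

End Graphs.

Definition del_vertex (T : finType) (adj : rel T) (v : T) : rel {x : T | x != v} :=
  fun x y => adj (val x) (val y).
Arguments del_vertex {T} adj v.

(* Main.v *)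
Require Import Defs.
From HB Require Import structures.
From mathcomp Require Import all_boot all_order all_algebra.
From mathcomp Require Import reals.
Set Implicit Arguments. Unset Strict Implicit. Unset Printing Implicit Defensive.
Import Order.TTheory GRing.Theory Num.Theory.
Local Open Scope ring_scope.

Section Aux.
Variables (T : finType) (adj : rel T) (v : T).
Local Notation S := {x : T | x != v}.
Local Notation adj' := (del_vertex adj v).
Local Notation E := (edge adj).
Local Notation E' := (edge adj').

Lemma emb_edge (e' : E') : is_edge adj [set val x | x in val e'].
Proof.
case: e' => /= A /existsP [x /existsP [y /andP [hxy /eqP ->]]].
apply/existsP; exists (val x); apply/existsP; exists (val y).
by rewrite (hxy : adj (val x) (val y)) /= imsetU1 imset_set1.
Qed.

Definition emb (e' : E') : E := exist (fun A => is_edge adj A) _ (emb_edge e').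

Lemma mem_emb (x : S) e' : (val x \in val (emb e')) = (x \in val e').
Proof. by rewrite /= mem_imset //; exact: val_inj. Qed.

Lemma v_notin_emb e' : v \notin val (emb e').
Proof.
apply/imsetP => -[x _ hx].
by move: (valP x); rewrite -hx eqxx.
Qed.

Lemma emb_inj : injective emb.
Proof.
move=> e1 e2 h; apply: val_inj.
have := f_equal val h => /=.
by apply: imset_inj; exact: val_inj.
Qed.

Lemma emb_surj (e : E) : v \notin val e -> exists e', emb e' = e.
Proof.
case: e => A hA /= hv.
have := hA => /existsP [x /existsP [y /andP [hxy /eqP hA']]].
rewrite hA' !inE negb_or in hv; case/andP: hv => hx hy.
rewrite eq_sym in hx; rewrite eq_sym in hy.
have he : is_edge adj' [set (exist _ x hx : S); (exist _ y hy : S)].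
  by apply/existsP; exists (exist _ x hx); apply/existsP; exists (exist _ y hy);
     rewrite /del_vertex /= hxy eqxx.
exists (exist (fun B => is_edge adj' B) _ he); apply: val_inj => /=.
by rewrite imsetU1 imset_set1 hA'.
Qed.


Lemma emb_inc (X : {set E'}) (x : S) :
  emb @: (X :&: inc adj' x) = (emb @: X) :&: inc adj (val x).
Proof.
apply/setP => e; apply/imsetP/setIP.
- case=> e' /setIP [he' hx] ->; split; first by apply: imset_f.
  by rewrite inE mem_emb; rewrite inE in hx.
- case=> /imsetP [e' he' ->] hx; exists e' => //.
  by rewrite inE he' inE -mem_emb; rewrite inE in hx.
Qed.

Lemma emb_D1 (X : {set E'}) g : emb @: X :\ emb g = emb @: (X :\ g).
Proof.
apply/setP => e; apply/setD1P/imsetP.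
- case=> hne /imsetP [e' he' he]; subst e; exists e' => //.
  by apply/setD1P; split => //; rewrite -(inj_eq emb_inj).
- case=> e' /setD1P [hne he'] ->; split; last by apply: imset_f.
  by rewrite (inj_eq emb_inj).
Qed.

Lemma emb_noinc (X : {set E'}) : emb @: X :&: inc adj v = set0.
Proof.
apply/setP => e; rewrite inE [RHS]inE; apply/negbTE/andP => -[/imsetP [e' _ ->]].
by rewrite inE (negbTE (v_notin_emb e')).
Qed.

Lemma preim_inc (x : S) : emb @^-1: inc adj (val x) = inc adj' x.
Proof. by apply/setP => e'; rewrite !inE mem_emb. Qed.

Lemma preim_D1 (X : {set E}) g : emb @^-1: (X :\ emb g) = emb @^-1: X :\ g.
Proof. by apply/setP => e'; rewrite !inE (inj_eq emb_inj). Qed.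

Lemma v_edge_uniq : symmetric adj -> #|[set w | adj v w]| = 1%N ->
  forall e1 e2 : E, v \in val e1 -> v \in val e2 -> e1 = e2.
Proof.
move=> hs /eqP/cards1P [w0 hw0].
have key (e : E) : v \in val e -> val e = [set v; w0].
  case: e => A /= /existsP [x /existsP [y /andP [hxy /eqP ->]]].
  rewrite !inE => /orP [/eqP hx | /eqP hy]; [subst x | subst y].
  - have : y \in [set w | adj v w] by rewrite inE.
    by rewrite hw0 inE => /eqP ->.
  - have : x \in [set w | adj v w] by rewrite inE hs.
    by rewrite hw0 inE => /eqP ->; rewrite setUC.
by move=> e1 e2 h1 h2; apply: val_inj; rewrite (key _ h1) (key _ h2).
Qed.


Lemma dir1 (R : realType) :
  strongly_EFX_orientable adj R -> strongly_EFX_orientable adj' R.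
Proof.
move=> H f' hf'.
pose f := fun (x : T) (X : {set E}) =>
  if insub x is Some x' then f' x' (emb @^-1: X) else 0 : R.
have hf : graphical_instance f.
  move=> x; split; [|split].
  - move=> X; rewrite /f; case: insubP => [x' _ _|_] //.
    by case: (hf' x') => h _; exact: h.
  - move=> A B hAB; rewrite /f; case: insubP => [x' _ _|_] //.
    by case: (hf' x') => _ [h _]; apply: h; exact: preimsetS.
  - move=> X; rewrite /f; case: insubP => [x' _ hx|_] //.
    rewrite -hx preimsetI preim_inc.
    by case: (hf' x') => _ [_ h]; exact: h.
case: (H f hf) => head [ho hE].
have hnv e' : head (emb e') != v.
  apply: contraNneq (v_notin_emb e') => <-; exact: ho.
exists (fun e' => exist (fun x => x != v) (head (emb e')) (hnv e')).
have hb w' : emb @^-1: bundle head (val w') =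
   bundle (fun e' => exist (fun x => x != v) (head (emb e')) (hnv e')) w'.
  by apply/setP => e'; rewrite !inE -val_eqE.
split.
- by move=> e'; rewrite -mem_emb /=; exact: ho.
- move=> u' w' g' hg'.
  rewrite -hb in hg'; rewrite inE in hg'.
  have key := hE (val u') (val w') (emb g') hg'.
  by move: key; rewrite /f !valK preim_D1 !hb.
Qed.

Lemma dir2 (R : realType) : symmetric adj -> #|[set w | adj v w]| = 1%N ->
  strongly_EFX_orientable adj' R -> strongly_EFX_orientable adj R.
Proof.
move=> hs h1 H f hf.
pose f' := fun (x : S) (X : {set E'}) => f (val x) (emb @: X).
have hf' : graphical_instance f'.
  move=> x; split; [|split].
  - by move=> X; case: (hf (val x)) => h _; exact: h.
  - move=> A B hAB; case: (hf (val x)) => _ [h _]; apply: h; exact: imsetS.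
  - move=> X; case: (hf (val x)) => _ [_ h]; rewrite /f' emb_inc h.
    by [].
case: (H f' hf') => head' [ho' hE'].
pose head := fun e : E =>
  if [pick e' | emb e' == e] is Some e' then val (head' e') else v.
have hemb e' : head (emb e') = val (head' e').
  rewrite /head; case: pickP => [e'' /eqP /emb_inj -> //|/(_ e')].
  by rewrite eqxx.
have hv (e : E) : v \in val e -> head e = v.
  rewrite /head; case: pickP => [e'' /eqP he|//].
  by rewrite -he (negbTE (v_notin_emb e'')).
have hb (w : S) : bundle head (val w) = emb @: bundle head' w.
  apply/setP => e; case: (boolP (v \in val e)) => hve.
  - rewrite inE hv // eq_sym (negbTE (valP w)); apply/esym/negbTE.
    apply/negP => /imsetP [e' _ he]; subst e.
    by rewrite (negbTE (v_notin_emb e')) in hve.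
  - have [e' he] := emb_surj hve; subst e.
    by rewrite mem_imset; [rewrite !inE hemb val_eqE | exact: emb_inj].
exists head; split.
- move=> e; case: (boolP (v \in val e)) => hve; first by rewrite hv.
  have [e' he] := emb_surj hve; subst e.
  by rewrite hemb mem_emb; exact: ho'.
- move=> u w g hg.
  case: (eqVneq w v) => [hw | hw].
  + subst w.
    have hgv : v \in val g.
      case: (boolP (v \in val g)) => // hve.
      have [g' hg'] := emb_surj hve; subst g.
      by rewrite inE hemb (negbTE (valP (head' g'))) in hg.
    have -> : bundle head v :\ g = set0.
      apply/setP => e; rewrite !inE; apply/negbTE/andP => -[hne he].
      case: (boolP (v \in val e)) => hve.
      * by rewrite (v_edge_uniq hs h1 hve hgv) eqxx in hne.
      * have [e' he'] := emb_surj hve; subst e.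
        by rewrite hemb (negbTE (valP (head' e'))) in he.
    by case: (hf u) => _ [h _]; apply: h; exact: sub0set.
  + pose w' := exist (fun x => x != v) w hw.
    have -> : w = val w' by [].
    rewrite hb in hg *.
    case/imsetP: hg => g' hg' ->.
    rewrite emb_D1.
    case: (eqVneq u v) => [hu | hu].
    * subst u; case: (hf v) => _ [hm hl].
      rewrite hl emb_noinc; apply: hm; exact: sub0set.
    * pose u' := exist (fun x => x != v) u hu.
      have -> : u = val u' by [].
      rewrite hb; exact: (hE' u' w' g' hg').
Qed.

End Aux.

Theorem mainTheorem9 (R : realType) (T : finType) (adj : rel T) (v : T) :
  symmetric adj -> irreflexive adj ->
  #|[set w | adj v w]| = 1%N ->
  (strongly_EFX_orientable (del_vertex adj v) R <->
   strongly_EFX_orientable adj R).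
Proof.
move=> hs _ h1; split; [exact: dir2 | exact: dir1].
Qed.
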